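(* Let $N\ge1$, $n\ge0$, and let $Q(\alpha_1,\dots,\alpha_N)=\big(\prod_{j=1}^N\alpha_j\big)\sum_{0\le m\le 3n/4}D_m(\alpha)$, where each $D_m=\sum_{m_1+\dots+m_N=m}c^{(m)}_{m_1\dots m_N}\alpha_1^{2m_1}\cdots\alpha_N^{2m_N}$ has rational coefficients and $c^{(m)}_{m_1\dots m_N}\neq0$ only if $m_j\le n-m$ for every $j$. Suppose $Q$ takes integer values whenever all $\alpha_j$ are odd integers. Then $Q$ can be written uniquely as $$Q(\alpha)=\sum_{k_1,\dots,k_N\ge0}C_{k_1\dots k_N}\prod_{j=1}^NP_{k_j}\Big(\frac{\alpha_j-1}2\Big),\qquad C_{k_1\dots k_N}\in\mathbb Z,$$ and $C_{k_1\dots k_N}\neq0$ implies $\lfloor k_j/2\rfloor\le n-\sum_{i=1}^N\lfloor k_i/2\rfloor$ for every $j$.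
   Context: $P_m(\alpha)=\frac{\alpha(\alpha-1)\cdots(\alpha-m+1)}{m!}$ (with $P_0=1$); $\lfloor\cdot\rfloor$ is the integer part. *)

(* Defs.v *)
From HB Require Import structures.
From mathcomp Require Import all_boot all_order all_algebra.
From mathcomp Require Import mpoly.
Set Implicit Arguments. Unset Strict Implicit. Unset Printing Implicit Defensive.
Import Order.TTheory GRing.Theory Num.Theory.
Local Open Scope ring_scope.

Definition Pbin (A : lalgType rat) (m : nat) (a : A) : A :=
  (m`!%:R : rat)^-1 *: \prod_(i < m) (a - i%:R).

(* Main.v *)
Require Import Defs.
From HB Require Import structures.
From mathcomp Require Import all_boot all_order all_algebra.
From mathcomp Require Import mpoly.
Import Order.TTheory GRing.Theory Num.Theory.
Local Open Scope ring_scope.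

Lemma prod_ffact (t k : nat) :
  \prod_(i < k) (t%:R - i%:R : rat) = (t ^_ k)%:R.
Proof.
elim: k => [|k IH]; first by rewrite big_ord0.
rewrite big_ord_recr /= IH ffactnSr natrM.
have [lekt|ltkt] := leqP k t; first by rewrite natrB.
by rewrite ffact_small // !mul0r.
Qed.

Lemma Pbin_nat (t k : nat) : Pbin k (t%:R : rat^o) = ('C(t, k))%:R.
Proof.
rewrite /Pbin.
have -> : \prod_(i < k) ((t%:R : rat^o) - i%:R) = (t ^_ k)%:R :> rat by exact: prod_ffact.
rewrite -bin_ffact natrM /GRing.scale /= mulrC -mulrA mulfV ?mulr1 //.
by rewrite pnatr_eq0 -lt0n fact_gt0.
Qed.

Lemma Pbin_S (A : comAlgType rat) (m : nat) (a : A) :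
  a * Pbin m a = (m.+1%:R : rat) *: Pbin m.+1 a + (m%:R : rat) *: Pbin m a.
Proof.
rewrite /Pbin big_ord_recr /= factS natrM invfM scalerA mulrA mulfV ?mul1r; last first.
  by rewrite pnatr_eq0.
rewrite -scalerAr (scalerA (m%:R)) [(m%:R : rat) * _]mulrC -scalerA -scalerDr; congr (_ *: _).
by rewrite mulrBr scaler_nat mulr_natr subrK mulrC.
Qed.
Section Span.
Variable N : nat.
Definition yv (j : 'I_N) : {mpoly rat[N]} := (2%:R : rat)^-1 *: ('X_j - 1).
Definition B (k : 'X_{1..N}) : {mpoly rat[N]} := \prod_(j < N) Pbin (k j) (yv j).

Lemma X_yv j : 'X_j = (2%:R : rat) *: yv j + 1.
Proof. by rewrite /yv scalerA mulfV ?pnatr_eq0 // scale1r subrK. Qed.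

Lemma B_mulX k j : B k * 'X_j =
  ((2 * (k j).+1)%N%:R : rat) *: B (k + U_(j))%MM + ((2 * k j).+1%:R : rat) *: B k.
Proof.
rewrite /B (bigD1 j) // [X in _ = _ *: X + _](bigD1 j) //.
set R' := \prod_(i < N | i != j) Pbin (k i) (yv i).
have -> : \prod_(i < N | i != j) Pbin ((k + U_(j))%MM i) (yv i) = R'.
  by apply: eq_bigr => i /negbTE ne; rewrite mnmDE mnm1E eq_sym ne addn0.
rewrite mnmDE mnm1E eqxx addn1 mulrAC !scalerAl -mulrDl; congr (_ * R').
rewrite [X in _ * X]X_yv mulrDr mulr1 -scalerAr mulrC Pbin_S scalerDr !scalerA.
rewrite -addrA -[X in _ + X]scale1r -scalerDl !natrM -natr1 -natr1.
congr (_ + _); rewrite scale1r; congr (_ *: _).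
rewrite -[X in _ + X]mul1r -mulrDl; congr (_ * _).
by rewrite -natr1 natrM.
Qed.
End Span.
Arguments B {N}.
Arguments yv {N}.
From mathcomp Require Import zify.

Lemma sum_sub_uniq (T : eqType) (V : nmodType) (r s : seq T) (F : T -> V) :
  uniq r -> uniq s -> {subset r <= s} -> (forall k, k \in s -> k \notin r -> F k = 0) ->
  \sum_(k <- r) F k = \sum_(k <- s) F k.
Proof.
move=> ur us rs h.
rewrite [RHS](bigID (fun k => k \in r)) /= [X in _ = _ + X]big1_seq ?addr0; last first.
  by move=> k /andP[kr ks]; apply: h.
rewrite -[RHS]big_filter; apply: perm_big; apply: uniq_perm => //; first exact: filter_uniq.
by move=> k; rewrite mem_filter; case kr: (k \in r) => //=; rewrite (rs _ kr).
Qed.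

Lemma sum_pred1_seq (T : eqType) (V : nmodType) (r : seq T) (F : T -> V) k :
  uniq r -> \sum_(k' <- r | k' == k) F k' = if k \in r then F k else 0.
Proof.
move=> ur; case: ifP => kr.
  rewrite big_mkcond (bigD1_seq k) //= eqxx big1 ?addr0 // => i /negbTE ->; done.
by rewrite big1_seq // => i /andP[/eqP -> ]; rewrite kr.
Qed.

Section Main.
Variable N : nat.
Implicit Types (k t : 'X_{1..N}).

Definition spanP (A : pred 'X_{1..N}) (p : {mpoly rat[N]}) :=
  exists s : seq ('X_{1..N} * rat), all (fun kc => A kc.1) s /\
    p = \sum_(kc <- s) kc.2 *: B kc.1.

Lemma span0 A : spanP A 0.
Proof. by exists [::]; rewrite big_nil. Qed.

Lemma spanD A p q : spanP A p -> spanP A q -> spanP A (p + q).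
Proof.
move=> [s1 [a1 ->]] [s2 [a2 ->]]; exists (s1 ++ s2).
by rewrite all_cat a1 a2 big_cat.
Qed.

Lemma spanZ A c p : spanP A p -> spanP A (c *: p).
Proof.
move=> [s [a ->]]; exists [seq (kc.1, c * kc.2) | kc <- s]; split.
  by rewrite all_map.
by rewrite big_map scaler_sumr; apply: eq_bigr => kc _; rewrite scalerA.
Qed.

Lemma span_sum A (I : Type) (r : seq I) (P : pred I) (F : I -> {mpoly rat[N]}) :
  (forall i, P i -> spanP A (F i)) -> spanP A (\sum_(i <- r | P i) F i).
Proof.
move=> h; apply: (big_ind (spanP A)); [exact: span0 | exact: spanD | exact: h].
Qed.

Lemma span_mono (A A' : pred 'X_{1..N}) p : (forall k, A k -> A' k) ->
  spanP A p -> spanP A' p.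
Proof.
move=> hA [s [a ->]]; exists s; split => //.
by apply/allP => kc kcs; apply: hA; exact: (allP a).
Qed.

Definition Ab (b : 'I_N -> nat) : pred 'X_{1..N} := fun k => [forall i, k i <= b i]%N.

Lemma Ab_mono b b' k : (forall i, b i <= b' i)%N -> Ab b k -> Ab b' k.
Proof. by move=> h /forallP hk; apply/forallP => i; apply: leq_trans (hk i) (h i). Qed.

Lemma span1 : spanP (Ab (fun _ => 0%N)) 1.
Proof.
exists [:: (0%MM, 1)]; split.
  by rewrite /= andbT; apply/forallP => i; rewrite mnm0E.
rewrite big_cons big_nil addr0 scale1r /B big1 // => i _.
by rewrite mnm0E /Pbin big_ord0 invr1 scale1r.
Qed.

Lemma span_mulX b j p : spanP (Ab b) p ->
  spanP (Ab (fun i => b i + (j == i))%N) (p * 'X_j).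
Proof.
move=> [s [a ->]].
exists (flatten [seq [:: ((kc.1 + U_(j))%MM, kc.2 * (2 * (kc.1 j).+1)%N%:R);
                        (kc.1, kc.2 * (2 * kc.1 j).+1%:R)] | kc <- s]); split.
  apply/allP => kc' /flattenP [l /mapP [kc kcs ->]].
  have /forallP hk := allP a kc kcs.
  rewrite !inE => /orP [] /eqP -> /=; apply/forallP => i.
    by rewrite mnmDE mnm1E leq_add2r.
  by apply: leq_trans (hk i) (leq_addr _ _).
rewrite big_flatten big_map mulr_suml; apply: eq_bigr => kc _.
by rewrite big_cons big_cons big_nil /= -scalerAl B_mulX scalerDr !scalerA addr0.
Qed.

Lemma span_mulXn b j e p : spanP (Ab b) p ->
  spanP (Ab (fun i => b i + (j == i) * e)%N) (p * 'X_j ^+ e).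
Proof.
elim: e => [|e IH] hp.
  by rewrite expr0 mulr1; apply: span_mono hp => k; apply: Ab_mono => i; rewrite muln0 addn0.
rewrite exprSr mulrA; apply: span_mono (@span_mulX _ j _ (IH hp)) => k.
by apply: Ab_mono => i; case: (j == i) => /=; lia.
Qed.

Lemma span_prod (r : seq 'I_N) (e : 'I_N -> nat) :
  spanP (Ab (fun i => \sum_(j <- r) (j == i) * e j)%N) (\prod_(j <- r) 'X_j ^+ e j).
Proof.
elim: r => [|x r IH].
  rewrite big_nil; apply: span_mono span1 => k; apply: Ab_mono => i.
  by rewrite big_nil.
rewrite big_cons mulrC; apply: span_mono (@span_mulXn _ x (e x) _ IH) => k.
by apply: Ab_mono => i; rewrite big_cons addnC.
Qed.

Lemma span_monom (e : 'X_{1..N}) :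
  spanP (Ab (fun i => (e i).+1)) ((\prod_(j < N) 'X_j) * 'X_[e]).
Proof.
have -> : (\prod_(j < N) 'X_j) * 'X_[e] = \prod_(j < N) 'X_j ^+ (e j).+1 :> {mpoly rat[N]}.
  by rewrite mpolyXE_id -big_split; apply: eq_bigr => j _; rewrite exprS.
apply: span_mono (span_prod (index_enum 'I_N) (fun j => (e j).+1)) => k.
apply: Ab_mono => i; rewrite (bigD1 i) //= eqxx mul1n big1 ?addn0 //.
by move=> j /negbTE ->.
Qed.

End Main.
Section Eval.
Variable N : nat.
Implicit Types (k t : 'X_{1..N}).

Definition w t k : rat := \prod_(j < N) ('C(t j, k j))%:R.
Definition vt t : 'I_N -> rat := fun j => ((2 * t j).+1)%:R.

Lemma Pbin_nat' (t k : nat) : (k`!%:R : rat)^-1 * \prod_(i < k) (t%:R - i%:R) = ('C(t, k))%:R.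
Proof. exact: Pbin_nat. Qed.

Lemma eval_B t k : (B k).@[vt t] = w t k.
Proof.
rewrite /B rmorph_prod; apply: eq_bigr => j _.
rewrite /Pbin -Pbin_nat'; etransitivity; first exact: mevalZ.
rewrite rmorph_prod /=; congr (_ * _).
apply: eq_bigr => i _; rewrite rmorphB /= rmorph_nat /yv mevalZ rmorphB /= mevalXU rmorph1.
have e : ((2 * t j).+1%:R : rat) - 1 = 2%:R * (t j)%:R by rewrite -natr1 addrK natrM.
by rewrite /vt /= e mulrA mulVf ?mul1r.
Qed.

Lemma eval_sum (s : seq 'X_{1..N}) (d : 'X_{1..N} -> rat) t :
  (\sum_(k <- s) d k *: B k).@[vt t] = \sum_(k <- s) d k * w t k.
Proof.
rewrite rmorph_sum; apply: eq_bigr => k _.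
by etransitivity; first exact: mevalZ; rewrite eval_B.
Qed.

Lemma mdeg_lt k k' : k' != k -> (forall i, k' i <= k i)%N -> (mdeg k' < mdeg k)%N.
Proof.
move=> ne le.
case: (boolP [forall i, k' i == k i]) => [/forallP h|/forallPn [i0 hi0]].
  by case/negP: ne; apply/eqP/mnmP => i; apply/eqP/h.
have lt0 : (k' i0 < k i0)%N by rewrite ltn_neqAle hi0 le.
rewrite !mdegE (bigD1 i0) //= [X in (_ < X)%N](bigD1 i0) //=.
by rewrite -addSn; apply: leq_add => //; apply: leq_sum.
Qed.

Lemma core (s : seq 'X_{1..N}) (d : 'X_{1..N} -> rat) (S : pred rat) :
  uniq s -> 0 \in S -> {in S &, forall x y, x - y \in S} -> {in S &, forall x y, x + y \in S} ->
  {in S, forall x (m : nat), x * m%:R \in S} ->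
  (forall t, \sum_(k <- s) d k * w t k \in S) -> forall k, k \in s -> d k \in S.
Proof.
move=> us S0 SB SD SM hE.
suff H : forall q k, mdeg k = q -> k \in s -> d k \in S by move=> k; exact: H.
elim/ltn_ind => q IH k dk ks.
have := hE k; rewrite (bigD1_seq k) //=.
have -> : w k k = 1 by rewrite /w big1 // => j _; rewrite binn.
rewrite mulr1 => hS.
set T := \sum_(i <- s | i != k) _ in hS.
have ST : T \in S.
  rewrite /T big_seq_cond; apply: (big_ind (fun x => x \in S)) => //.
  move=> k' /andP [k's k'ne].
  have [->|wne] := eqVneq (w k k') 0; first by rewrite mulr0.
  have le : forall i, (k' i <= k i)%N.
    move=> i; rewrite -bin_gt0 lt0n; apply/negP => /eqP h0.
    by move: wne; rewrite /w (bigD1 i) //= h0 mul0r eqxx.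
  have lt : (mdeg k' < q)%N by rewrite -dk; exact: mdeg_lt.
  have := IH _ lt k' erefl k's.
  by move/SM; rewrite /w -natr_prod; apply.
by rewrite -(addrK T (d k)); apply: SB.
Qed.

Lemma coef_eq (s : seq 'X_{1..N}) (d1 d2 : 'X_{1..N} -> rat) :
  uniq s -> \sum_(k <- s) d1 k *: B k = \sum_(k <- s) d2 k *: B k ->
  forall k, k \in s -> d1 k = d2 k.
Proof.
move=> us heq k ks; apply/eqP; rewrite -subr_eq0.
have := @core s (fun k => d1 k - d2 k) (pred1 0) us.
apply => //.
- by move=> x y /eqP -> /eqP ->; rewrite subr0.
- by move=> x y /eqP -> /eqP ->; rewrite addr0.
- by move=> x /eqP -> m; rewrite mul0r.
move=> t; rewrite -eval_sum.
have -> : \sum_(k <- s) (d1 k - d2 k) *: B k = 0.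
  by rewrite (eq_bigr _ (fun i _ => scalerBl _ _ _)) sumrB heq subrr.
by rewrite rmorph0.
Qed.

End Eval.
Lemma canon N (s : seq ('X_{1..N} * rat)) :
  \sum_(kc <- s) kc.2 *: B kc.1 =
  \sum_(k <- undup (map fst s)) (\sum_(kc <- s | kc.1 == k) kc.2) *: B k.
Proof.
symmetry.
rewrite (eq_bigr (fun k => \sum_(kc <- s | kc.1 == k) kc.2 *: B k)); last first.
  by move=> k _; rewrite scaler_suml.
rewrite (exchange_big_dep xpredT) //=.
apply: eq_big_seq => kc kcs.
rewrite (eq_bigl (fun k => k == kc.1)); last by move=> k; rewrite eq_sym.
by rewrite sum_pred1_seq ?undup_uniq // mem_undup map_f.
Qed.

Definition L N (C : {mpoly int[N]}) : {mpoly rat[N]} :=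
  \sum_(k <- msupp C) ((C@_k)%:~R : rat) *: B k.
Arguments L {N}.

Lemma L_ext N (C : {mpoly int[N]}) r : uniq r -> {subset msupp C <= r} ->
  L C = \sum_(k <- r) ((C@_k)%:~R : rat) *: B k.
Proof.
move=> ur sub; apply: sum_sub_uniq => //.
by move=> k _ kn; rewrite (memN_msupp_eq0 kn) mulr0z scale0r.
Qed.

Lemma L_inj N (C1 C2 : {mpoly int[N]}) : L C1 = L C2 -> C1 = C2.
Proof.
move=> h; apply/mpolyP => k.
set r := undup (msupp C1 ++ msupp C2).
have ur : uniq r by exact: undup_uniq.
have s1 : {subset msupp C1 <= r} by move=> x xs; rewrite mem_undup mem_cat xs.
have s2 : {subset msupp C2 <= r} by move=> x xs; rewrite mem_undup mem_cat xs orbT.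
rewrite (@L_ext _ _ _ ur s1) (@L_ext _ _ _ ur s2) in h.
case kr: (k \in r).
  by apply/eqP; rewrite -(eqr_int rat); apply/eqP; exact: (@coef_eq _ r (fun k => (C1@_k)%:~R) (fun k => (C2@_k)%:~R) ur h k kr).
have k1 : k \notin msupp C1 by apply/negP => /s1; rewrite kr.
have k2 : k \notin msupp C2 by apply/negP => /s2; rewrite kr.
by rewrite !memN_msupp_eq0.
Qed.
Definition good N n (k : 'X_{1..N}) :=
  [forall j, (k j)./2 + \sum_(i < N) (k i)./2 <= n]%N.
Arguments good {N}.

Theorem mainTheorem2 (N n : nat) (hN : (1 <= N)%N)
  (D : nat -> {mpoly rat[N]}) (Q : {mpoly rat[N]})
  (hQ : Q = (\prod_(j < N) 'X_j) * \sum_(0 <= m < n.+1 | (4 * m <= 3 * n)%N) D m)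
  (hD : forall (m : nat) (mono : 'X_{1..N}), mono \in msupp (D m) ->
          exists mm : 'X_{1..N},
            [/\ mono = (mm + mm)%MM, mdeg mm = m & forall j : 'I_N, (mm j <= n - m)%N])
  (hint : forall x : 'I_N -> int, (forall j, ~~ (2 %| x j)%Z) ->
          exists z : int, Q.@[fun j => (x j)%:~R] = z%:~R) :
  let repr (C : {mpoly int[N]}) :=
    Q = \sum_(k <- msupp C)
          ((C@_k)%:~R : rat) *: \prod_(j < N) Pbin (k j) ((2%:R : rat)^-1 *: ('X_j - 1)) in
  (exists! C : {mpoly int[N]}, repr C) /\
  (forall C : {mpoly int[N]}, repr C ->
     forall k : 'X_{1..N}, k \in msupp C ->
       forall j : 'I_N, ((k j)./2 + \sum_(i < N) (k i)./2 <= n)%N).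
Proof.
move=> repr.
have hrepr : forall C, repr C <-> Q = L C by [].
have hspan : @spanP N (good n) Q.
  rewrite hQ mulr_sumr; apply: span_sum => m hm.
  rewrite (mpolyE (D m)) mulr_sumr big_seq; apply: span_sum => mono hmono.
  rewrite -scalerAr; apply: spanZ.
  have [mm [-> hdeg hle]] := hD m mono hmono.
  apply: (@span_mono N _ _ _ _ (@span_monom N (mm + mm)%MM)) => k /forallP hk; apply/forallP => j.
  have h2 : forall i, ((k i)./2 <= mm i)%N.
    by move=> i; have := hk i; rewrite mnmDE; lia.
  have hs : (\sum_(i < N) (k i)./2 <= m)%N.
    by rewrite -hdeg mdegE; apply: leq_sum => i _; exact: h2.
  have := h2 j; have := hle j; lia.
have [s [sgood hs]] := hspan.
rewrite canon in hs.
set keys := undup (map fst s) in hs.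
set c := fun k => \sum_(kc <- s | kc.1 == k) kc.2 in hs.
have ukeys : uniq keys by exact: undup_uniq.
have cint : forall k, k \in keys -> c k \is a Num.Def.int_num.
  apply: (@core N keys c [pred x | x \is a Num.Def.int_num]) => //.
  - by move=> x y /= hx hy; rewrite rpredB.
  - by move=> x y /= hx hy; rewrite rpredD.
  - by move=> x /= hx m; rewrite rpredM // natr_int.
  move=> t; rewrite /= -eval_sum -hs.
  have [|z hz] := hint (fun j => ((2 * t j).+1)%:Z).
    by move=> j; rewrite dvdzE /= dvdn2 /= oddM.
  rewrite (meval_eq (v1 := vt N t) (v2 := fun j => ((((2 * t j).+1)%:Z)%:~R : rat))) ?hz ?intr_int //.
set C : {mpoly int[N]} := \sum_(k <- keys) (Num.floor (c k)) *: 'X_[k].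
have coefC : forall k, C@_k = if k \in keys then Num.floor (c k) else 0.
  move=> k; rewrite /C raddf_sum /=.
  rewrite (eq_bigr (fun k' => if k' == k then Num.floor (c k') else 0)); last first.
    by move=> k' _; rewrite mcoeffZ mcoeffX; case: (k' == k); rewrite ?mulr1 ?mulr0.
  by rewrite -big_mkcond sum_pred1_seq.
have suppC : {subset msupp C <= keys}.
  by move=> k; rewrite mcoeff_msupp coefC; case: ifP => //; rewrite eqxx.
have reprC : Q = L C.
  rewrite (@L_ext _ _ _ ukeys suppC) hs; apply: eq_big_seq => k kk.
  by rewrite coefC kk floorK // cint.
split.
  exists C; split => // C' /hrepr hC'; apply: L_inj; by rewrite -reprC.
move=> C' /hrepr hC' k kC' j.
have eC : C' = C by apply: L_inj; rewrite -reprC.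
rewrite eC in kC'; have kk := suppC _ kC'.
move: kk; rewrite mem_undup => /mapP [kc kcs ->].
by have /forallP := allP sgood kc kcs; apply.
Qed.
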